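(* Let $S,T\subseteq\mathbb{Z}_{>0}$ be finite with $T\preceq S$. Then $T\triangleleft S\preceq S$.
   Context: For a finite set $S\subseteq\mathbb{Z}_{>0}$, $S(i)$ denotes its $i$th smallest element. $T\preceq S$ means $|T|\ge|S|$ and $T(i)<S(i)$ for all $i\in[|S|]$. For finite $S,T$, $T\triangleleft S$ is computed by going through $S$ from largest to smallest; each $s$ picks the largest element of $T$ less than $s$ not yet picked (if one exists); $T\triangleleft S$ is the set of picked elements. *)

(* Defs.v *)
From mathcomp Require Import all_boot.
From mathcomp Require Import finmap.
Set Implicit Arguments. Unset Strict Implicit. Unset Printing Implicit Defensive.
Local Open Scope fset_scope.

Definition pos_set (S : {fset nat}) : bool := all (fun x => 0 < x) S.

Definition sorted_elems (S : {fset nat}) : seq nat := sort leq S.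

(* S(i) : the i-th smallest element of S, for 1 <= i <= #|S| *)
Definition ith (S : {fset nat}) (i : nat) : nat := nth 0 (sorted_elems S) i.-1.

Definition preceq (T S : {fset nat}) : Prop :=
  #|` S| <= #|` T| /\ forall i, 1 <= i <= #|` S| -> ith T i < ith S i.

(* the greedy procedure: [avail] = elements of T not yet picked,
   [ss] = elements of S still to process, from largest to smallest *)
Fixpoint pick_aux (avail : seq nat) (ss : seq nat) : seq nat :=
  match ss with
  | [::] => [::]
  | s :: ss' =>
      let cands := [seq t <- avail | t < s] in
      if cands is [::] then pick_aux avail ss'
      else let m := \max_(t <- cands) t in m :: pick_aux (rem m avail) ss'
  end.

Definition tri (T S : {fset nat}) : {fset nat} :=
  [fset x | x in pick_aux (enum_fset T) (rev (sorted_elems S))].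

(* Main.v *)
Require Import Defs.
From mathcomp Require Import all_boot.
From mathcomp Require Import finmap.
From mathcomp Require Import zify.
Local Open Scope fset_scope.

Definition CC (t s : seq nat) := forall x, count (fun y => y <= x) s <= count (fun y => y < x) t.

Lemma lemA (s t : seq nat) : sorted ltn s -> size s <= size t ->
  (forall i, i < size s -> nth 0 t i < nth 0 s i) -> CC t s.
Proof.
elim: s t => [|a s IH] t /= Hs Hsz Hn x; first by [].
case: t Hsz Hn => [|b t] //= Hsz Hn.
have Hba := Hn 0 isT; simpl in Hba.
have Hall : all (fun y => a < y) s by exact: (order_path_min ltn_trans).
case: (leqP a x) => Hax.
  have -> : b < x by apply: leq_trans Hax.
  rewrite !add1n ltnS; apply: IH => //.
  - by apply: path_sorted Hs.
  - by move=> i Hi; apply: (Hn i.+1).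
have -> : count (fun y => y <= x) s = 0.
  apply/eqP; rewrite -leqn0 leqNgt -has_count; apply/hasPn => y /(allP Hall) Hy.
  rewrite -ltnNge; exact: ltn_trans Hax Hy.
by [].
Qed.

Lemma lemB (s t : seq nat) : sorted ltn s -> sorted ltn t -> CC t s ->
  size s <= size t /\ (forall i, i < size s -> nth 0 t i < nth 0 s i).
Proof.
elim: s t => [|a s IH] t /= Hs Ht H; first by [].
have Hall : all (fun y => a < y) s by exact: (order_path_min ltn_trans).
have /= Ha := H a; rewrite leqnn add1n in Ha.
case: t Ht H Ha => [|b t] //= Ht H Ha.
have Hallt : all (fun y => b < y) t by exact: (order_path_min ltn_trans).
have Hba : b < a.
  case: (ltnP b a) => // Hab; move: Ha.
  rewrite (ltnNge b a) Hab /= add0n; have -> : count (fun y => y < a) t = 0; last by [].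
  apply/eqP; rewrite -leqn0 leqNgt -has_count; apply/hasPn => y /(allP Hallt) Hy.
  rewrite -leqNgt; exact: leq_trans Hab (ltnW Hy).
have [IH1 IH2] : size s <= size t /\ (forall i, i < size s -> nth 0 t i < nth 0 s i).
  apply: IH; [exact: path_sorted Hs | exact: path_sorted Ht | move=> x].
  case: (leqP a x) => Hax.
    have /= := H x; rewrite Hax (leq_trans Hba Hax) !add1n ltnS; exact.
  have -> : count (fun y => y <= x) s = 0; last by [].
  apply/eqP; rewrite -leqn0 leqNgt -has_count; apply/hasPn => y /(allP Hall) Hy.
  rewrite -ltnNge; exact: ltn_trans Hax Hy.
split; first by [].
by case=> [|i] //= Hi; apply: IH2.
Qed.


Lemma max_mem (l : seq nat) : l != [::] -> \max_(t <- l) t \in l.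
Proof.
elim: l => [|c l IH] //= _; rewrite big_cons inE.
case: l IH => [|d l] IH; first by rewrite big_nil maxn0 eqxx.
have /(_ isT) := IH; case: (leqP c (\max_(t <- d :: l) t)) => H Hin.
  by rewrite Hin orbT.
by rewrite eqxx.
Qed.

Lemma pick_sub (A ss : seq nat) : uniq A ->
  uniq (pick_aux A ss) /\ {subset pick_aux A ss <= A}.
Proof.
elim: ss A => [|s ss IH] A HA /=; first by [].
case E: [seq t <- A | t < s] => [|c cs]; first exact: IH.
set m := \max_(t <- c :: cs) t.
have Hm : m \in A.
  have := @max_mem (c :: cs) isT; rewrite -/m -E mem_filter.
  by case/andP.
have HA' : uniq (rem m A) by apply: rem_uniq.
have [U1 U2] := IH (rem m A) HA'.
split.
  rewrite /= U1 andbT; apply/negP => /U2.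
  by rewrite mem_rem_uniq // inE eqxx.
move=> y; rewrite inE => /orP [/eqP -> // | /U2 Hy].
exact: (mem_rem Hy).
Qed.

Definition Rge := fun x y : nat => y <= x.

Lemma pickC (A ss : seq nat) : sorted Rge ss -> CC A ss -> CC (pick_aux A ss) ss.
Proof.
elim: ss A => [|s ss IH] A /= Hsort H; first by [].
have Htr : transitive Rge by move=> y x z Hyx Hzy; rewrite /Rge; exact: leq_trans Hzy Hyx.
have Hall : all (fun y => y <= s) ss by exact: (order_path_min Htr).
have /= Hs := H s; rewrite leqnn add1n in Hs.
have Hcs : count (fun y => y <= s) ss = size ss.
  by apply/eqP; rewrite -all_count.
rewrite Hcs in Hs.
case E: [seq t <- A | t < s] => [|c cs].
  by move: Hs; rewrite -size_filter E.
set m := \max_(t <- c :: cs) t.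
have Hm : m \in A /\ m < s.
  have := @max_mem (c :: cs) isT; rewrite -/m -E mem_filter.
  by case/andP.
case: Hm => HmA Hms.
have Hmax : forall a, a \in A -> a < s -> a <= m.
  move=> a Ha Has; apply: leq_bigmax_seq => //.
  by rewrite -E mem_filter Has Ha.
have Hc : forall x, count (fun y => y < x) A = ((m < x) + count (fun y => y < x) (rem m A))%N.
  by move=> x; rewrite (permP (perm_to_rem HmA)).
have HA' : CC (rem m A) ss.
  move=> x; have := Hc x; case: (ltnP m x) => Hmx /= Hcx.
    case: (leqP s x) => Hsx.
      have /= := H x; rewrite Hsx Hcx add1n !ltnS; exact.
    have Heq : count (fun y => y < x) A = count (fun y => y < s) A.
      apply: eq_in_count => a Ha /=; apply/idP/idP => Hlt.
        exact: ltn_trans Hlt Hsx.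
      exact: leq_ltn_trans (Hmax a Ha Hlt) Hmx.
    rewrite Heq add1n in Hcx; rewrite Hcx ltnS in Hs.
    exact: leq_trans (count_size _ _) Hs.
  have /= := H x; rewrite Hcx add0n => Hx.
  exact: leq_trans (leq_addl _ _) Hx.
have IH' := IH (rem m A) (path_sorted Hsort) HA'.
move=> x /=; have := IH' x; case: (leqP s x) => Hsx /=.
  by rewrite (leq_trans Hms Hsx) !add1n ltnS.
rewrite add0n => Hx; exact: leq_trans Hx (leq_addl _ _).
Qed.

Lemma sorted_ltn_fset (S : {fset nat}) : sorted ltn (sorted_elems S).
Proof.
rewrite ltn_sorted_uniq_leq sort_uniq fset_uniq /=.
exact: (sort_sorted leq_total).
Qed.

Theorem corollary4p8 (S T : {fset nat}) :
  pos_set S -> pos_set T -> preceq T S -> preceq (tri T S) S.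
Proof.
move=> _ _ [Hsz Hlt].
have HC : CC (sorted_elems T) (sorted_elems S).
  apply: lemA; first exact: sorted_ltn_fset.
    by rewrite /sorted_elems !size_sort.
  move=> i Hi; have := Hlt i.+1; rewrite /ith /=; apply.
  by rewrite /sorted_elems size_sort in Hi.
have HC2 : CC (enum_fset T) (rev (sorted_elems S)).
  by move=> x; rewrite count_rev; have := HC x; rewrite /sorted_elems !count_sort.
have Hsr : sorted Rge (rev (sorted_elems S)).
  rewrite rev_sorted; exact: (sort_sorted leq_total).
have HP := @pickC _ _ Hsr HC2.
set P := pick_aux (enum_fset T) (rev (sorted_elems S)) in HP.
have [UP _] := @pick_sub _ (rev (sorted_elems S)) (fset_uniq T).
have Hperm : perm_eq (enum_fset (tri T S)) P.
  apply: uniq_perm; [exact: fset_uniq | exact: UP | move=> x].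
  by rewrite /tri inE /=.
have HC3 : CC (sorted_elems (tri T S)) (sorted_elems S).
  move=> x; rewrite /sorted_elems !count_sort (permP Hperm).
  by have := HP x; rewrite count_rev /sorted_elems count_sort.
have [B1 B2] := @lemB _ _ (sorted_ltn_fset S) (sorted_ltn_fset (tri T S)) HC3.
move: B1 B2; rewrite /sorted_elems !size_sort => B1 B2.
split => // -[|i] // /andP [_ Hi].
exact: B2.
Qed.
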